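(* Let $s\ge 1$ be an integer, let $(G,Z)$ be a plantation, let $F=G\setminus Z$, and let $N$ be the set of vertices of $V(G)\setminus Z$ with a neighbour in $Z$. Suppose that every component of $F$ contains at least two vertices of $N$. Then there is a normal set $\mathcal{S}$ of transitions of $(G,Z)$ with $|\mathcal{S}|\ge |N|/4$.
   Context: Graphs are finite and simple. Two subgraphs are anticomplete if their vertex sets are disjoint and no edge joins them. $G$ is $s\mathcal{O}$-free if no $s$ cycles of $G$ are pairwise vertex-disjoint and pairwise anticomplete. $Z\subseteq V(G)$ is cycle-hitting if every cycle of $G$ has a vertex in $Z$. A plantation is a pair $(G,Z)$ with $G$ an $s\mathcal{O}$-free graph and $Z$ cycle-hitting. A transition of $(G,Z)$ is a path of $F$ of length at least one with both ends in $N$ and no internal vertex in $N$. A set $\mathcal{S}$ of transitions is normal if (i) for all distinct $P,Q\in\mathcal{S}$, either $P,Q$ are anticomplete or $P,Q$ have a common end, and (ii) each $P\in\mathcal{S}$ has an edge that belongs to no other member of $\mathcal{S}$. *)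

(* Defs.v *)
From mathcomp Require Import all_boot.
Set Implicit Arguments. Unset Strict Implicit. Unset Printing Implicit Defensive.

Section Graphs.
Variables (T : finType) (e : rel T).

Definition simple_graph := symmetric e /\ irreflexive e.

Definition is_cycle (c : seq T) : Prop :=
  [/\ 3 <= size c, uniq c & cycle e c].

Definition anticomplete (A B : {set T}) : Prop :=
  [disjoint A & B] /\ (forall x y, x \in A -> y \in B -> ~~ e x y).

Definition sO_free (s : nat) : Prop :=
  ~ exists cs : seq (seq T),
      [/\ size cs = s,
          (forall i, i < s -> is_cycle (nth [::] cs i)) &
          (forall i j, i < s -> j < s -> i != j ->
             anticomplete [set x in nth [::] cs i] [set x in nth [::] cs j])].

Definition cycle_hitting (Z : {set T}) : Prop :=
  forall c, is_cycle c -> exists2 x, x \in c & x \in Z.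

Definition plantation (s : nat) (Z : {set T}) : Prop :=
  simple_graph /\ sO_free s /\ cycle_hitting Z.

Definition Frel (Z : {set T}) : rel T :=
  fun x y => [&& e x y, x \notin Z & y \notin Z].

Definition Nset (Z : {set T}) : {set T} :=
  [set x | (x \notin Z) && [exists z, (z \in Z) && e x z]].

(* A path of F given by its vertex sequence; its length is size p - 1. *)
Definition is_pathF (Z : {set T}) (p : seq T) : Prop :=
  match p with
  | [::] => False
  | x :: q => uniq p /\ path (Frel Z) x q
  end.

Definition ends (p : seq T) : seq T :=
  if p is x :: q then [:: x; last x q] else [::].

Definition internal (p : seq T) : seq T :=
  if p is x :: q then behead (belast x q) else [::].

Definition pedges (p : seq T) : seq {set T} :=
  [seq [set ab.1; ab.2] | ab <- zip p (behead p)].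

Definition transition (Z : {set T}) (p : seq T) : Prop :=
  [/\ is_pathF Z p, 2 <= size p,
      (forall x, x \in ends p -> x \in Nset Z) &
      (forall x, x \in internal p -> x \notin Nset Z)].

(* A normal set of transitions, given as a list S; members are indexed, and
   condition (ii) forces distinct indices to be distinct subgraphs, so
   size S is the number of transitions in the set. *)
Definition normal_set (S : seq (seq T)) : Prop :=
  (forall i j, i < size S -> j < size S -> i != j ->
     let P := nth [::] S i in let Q := nth [::] S j in
     anticomplete [set x in P] [set x in Q] \/
     exists2 x, x \in ends P & x \in ends Q) /\
  (forall i, i < size S -> exists2 E, E \in pedges (nth [::] S i) &
     forall j, j < size S -> j != i -> E \notin pedges (nth [::] S j)).

End Graphs.

(* Main.v *)
Require Import Defs.
From mathcomp Require Import all_boot zify.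
Set Implicit Arguments. Unset Strict Implicit. Unset Printing Implicit Defensive.

Section Proof.
Variables (T : finType) (e : rel T) (Z : {set T}).
Hypothesis esy : symmetric e.
Hypothesis eirr : irreflexive e.
Hypothesis hit : cycle_hitting e Z.
Hypothesis hyp : forall x, x \notin Z ->
  1 < #|[set y in Nset e Z | connect (Frel e Z) x y]|.

Local Notation F := (Frel e Z).
Local Notation N := (Nset e Z).

Lemma Fsym : symmetric F.
Proof. move=> x y; rewrite /Frel esy; congr (_ && _); apply: andbC. Qed.
Lemma F_notZl x y : F x y -> x \notin Z. Proof. by case/and3P. Qed.
Lemma F_notZr x y : F x y -> y \notin Z. Proof. by case/and3P. Qed.
Lemma F_e x y : F x y -> e x y. Proof. by case/and3P. Qed.
Lemma F_irr x : F x x = false. Proof. by rewrite /Frel eirr. Qed.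
Lemma N_notZ x : x \in N -> x \notin Z. Proof. by rewrite inE => /andP[]. Qed.
Lemma csym : connect_sym F. Proof. exact: sym_connect_sym Fsym. Qed.

Lemma connect_notZ x y : x \notin Z -> connect F x y -> y \notin Z.
Proof.
move=> xZ /connectP [p Hp ->]; elim: p x xZ Hp => //= z p IH x xZ /andP[Hxz Hp].
exact: IH (F_notZr Hxz) Hp.
Qed.

Definition rtP x y := [&& y \in N, connect F x y &
  [forall y', ((y' \in N) && connect F x y') ==> (enum_rank y <= enum_rank y')]].
Definition rt x := odflt x [pick y | rtP x y].

Lemma rt_spec x : x \notin Z -> rtP x (rt x).
Proof.
move=> xZ; rewrite /rt; case: pickP => [y //|none]; exfalso.
have := hyp xZ; set Q := [set y in N | connect F x y].
case: (set_0Vmem Q) => [->|[y0 y0Q]]; first by rewrite cards0.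
move=> _.
case: (@arg_minnP T y0 (fun y => y \in Q) (fun y => enum_rank y : nat) y0Q) => y yQ ymin.
move: yQ; rewrite /Q inE => /andP[H1 H2].
move: (none y); rewrite /rtP H1 H2 /=.
move/negbT/negP; apply; apply/forallP => y'; apply/implyP => Hy'; apply: ymin.
by rewrite /Q inE.
Qed.

Lemma rt_N x : x \notin Z -> rt x \in N.
Proof. by move/rt_spec/and3P=> []. Qed.
Lemma rt_conn x : x \notin Z -> connect F x (rt x).
Proof. by move/rt_spec/and3P=> []. Qed.
Lemma rt_notZ x : x \notin Z -> rt x \notin Z.
Proof. by move/rt_N/N_notZ. Qed.

Lemma rt_same x x' : x \notin Z -> connect F x x' -> rt x' = rt x.
Proof.
move=> xZ Hc.
have E : [pick y | rtP x' y] = [pick y | rtP x y].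
  have C z : connect F x' z = connect F x z by rewrite (same_connect csym Hc).
  apply: eq_pick => y; rewrite /rtP C; congr (_ && (_ && _)).
  by apply: eq_forallb => z; rewrite C.
move: (rt_spec xZ); rewrite /rt E; case: pickP => //= none.
by rewrite none.
Qed.

Lemma rt_rt x : x \notin Z -> rt (rt x) = rt x.
Proof. by move=> xZ; apply: rt_same => //; apply: rt_conn. Qed.

Lemma conn_rt x y : x \notin Z -> y \notin Z -> rt x = rt y -> connect F x y.
Proof.
move=> xZ yZ E; apply: connect_trans (rt_conn xZ) _.
by rewrite E csym; apply: rt_conn.
Qed.

Definition dpred x n := [exists p : n.-tuple T, path F (rt x) p && (last (rt x) p == x)].
Definition dpred' x n := (x \in Z) || dpred x n.

Lemma dpredP x n : reflect (exists p, [/\ size p = n, path F (rt x) p & last (rt x) p = x])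
  (dpred x n).
Proof.
apply: (iffP existsP) => [[p /andP[Hp /eqP Hl]]|[p [Hs Hp Hl]]].
  by exists (val p); rewrite size_tuple.
by exists (@Tuple n T p (introT eqP Hs)); rewrite /= Hp Hl eqxx.
Qed.

Lemma dex x : exists n, dpred' x n.
Proof.
case xZ: (x \in Z); first by exists 0; rewrite /dpred' xZ.
have: connect F (rt x) x by rewrite csym; apply: rt_conn; rewrite xZ.
case/connectP => p Hp Hl; exists (size p); apply/orP; right.
by apply/dpredP; exists p.
Qed.

Definition h x := ex_minn (dex x).

Lemma h_dp x : x \notin Z -> dpred x (h x).
Proof. move=> xZ; rewrite /h; case: ex_minnP => m; by rewrite /dpred' (negbTE xZ). Qed.

Lemma h_le x n : x \notin Z -> dpred x n -> h x <= n.
Proof.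
move=> xZ Hd; rewrite /h; case: ex_minnP => m _; apply.
by rewrite /dpred' Hd orbT.
Qed.

Lemma h0 x : x \notin Z -> (h x == 0) = (x == rt x).
Proof.
move=> xZ; apply/idP/idP.
  move/eqP=> H; move: (h_dp xZ); rewrite H => /dpredP [p [Hs _ Hl]].
  by move: Hl; case: p Hs => //= _ ->.
move/eqP=> E; rewrite -leqn0; apply: h_le => //; apply/dpredP; exists [::].
by rewrite /= -E.
Qed.

Lemma h_rt x : x \notin Z -> h (rt x) = 0.
Proof. by move=> xZ; apply/eqP; rewrite h0 ?rt_rt ?rt_notZ. Qed.

Lemma h_edge x y : x \notin Z -> F x y -> h y <= (h x).+1.
Proof.
move=> xZ Fxy; have yZ := F_notZr Fxy.
have E : rt y = rt x by apply: rt_same => //; apply: connect1.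
apply: h_le => //; move: (h_dp xZ) => /dpredP [p [Hs Hp Hl]].
apply/dpredP; exists (rcons p y); rewrite size_rcons Hs rcons_path last_rcons E Hp Hl.
by split.
Qed.

Lemma h_down x : x \notin Z -> 0 < h x -> exists2 y, F x y & h y = (h x).-1.
Proof.
move=> xZ hp; move: (h_dp xZ) => /dpredP [p [Hs Hp Hl]].
move: Hs Hp Hl; case/lastP: p => [/= Hs|q z]; first by rewrite -Hs in hp.
rewrite size_rcons rcons_path last_rcons => Hs /andP[Hq Hz] Ez; subst z.
exists (last (rt x) q); first by rewrite Fsym.
have yZ := F_notZl Hz.
have E : rt (last (rt x) q) = rt x.
  by apply: rt_same => //; apply: connect1; rewrite Fsym.
have h1 : h (last (rt x) q) <= size q.
  by apply: h_le => //; apply/dpredP; exists q; rewrite E.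
have h2 := h_edge yZ Hz. lia.
Qed.

Definition par x := if 0 < h x then odflt x [pick y | F x y && (h y == (h x).-1)] else x.

Lemma par_spec x : x \notin Z -> 0 < h x -> F x (par x) /\ h (par x) = (h x).-1.
Proof.
move=> xZ hp; rewrite /par hp; case: pickP => [y /andP[H1 /eqP H2] //|none].
case: (h_down xZ hp) => y H1 H2; move: (none y); by rewrite H1 H2 eqxx.
Qed.

Lemma par0 x : h x = 0 -> par x = x.
Proof. by rewrite /par => ->. Qed.

Lemma par_notZ x : x \notin Z -> par x \notin Z.
Proof.
move=> xZ; case: (posnP (h x)) => [/par0 -> //|hp].
exact: F_notZr (par_spec xZ hp).1.
Qed.

Lemma par_rt x : x \notin Z -> rt (par x) = rt x.
Proof.
move=> xZ; case: (posnP (h x)) => [/par0 -> //|hp].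
by apply: rt_same => //; apply: connect1; exact: (par_spec xZ hp).1.
Qed.

Lemma par_h x : x \notin Z -> h (par x) = (h x).-1.
Proof.
move=> xZ; case: (posnP (h x)) => [H|hp]; first by rewrite par0 H.
exact: (par_spec xZ hp).2.
Qed.

Lemma iter_notZ k x : x \notin Z -> iter k par x \notin Z.
Proof. by move=> xZ; elim: k => //= k IH; apply: par_notZ. Qed.

Lemma iter_rt k x : x \notin Z -> rt (iter k par x) = rt x.
Proof. by move=> xZ; elim: k => //= k IH; rewrite par_rt ?iter_notZ. Qed.

Lemma iter_h k x : x \notin Z -> h (iter k par x) = h x - k.
Proof. by move=> xZ; elim: k => [|k IH] /=; rewrite ?subn0 // par_h ?iter_notZ // IH; lia. Qed.

Lemma iter_big k x : x \notin Z -> h x <= k -> iter k par x = rt x.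
Proof.
move=> xZ hk; have yZ := iter_notZ k xZ.
apply/eqP; rewrite -(iter_rt k xZ) -h0 // iter_h //; lia.
Qed.


Definition tpP x i := (0 < i) && ((x \in Z) || (iter i par x \in N)).
Lemma tex x : exists i, tpP x i.
Proof.
exists (h x).+1; rewrite /tpP /=; case: (boolP (x \in Z)) => //= xZ.
by rewrite iter_big // par0 ?h_rt // rt_N.
Qed.
Definition tp x := ex_minn (tex x).
Definition pN x := iter (tp x) par x.

Lemma tp_pos x : 0 < tp x.
Proof. by rewrite /tp; case: ex_minnP => m /andP[]. Qed.
Lemma pN_N x : x \notin Z -> pN x \in N.
Proof. by move=> xZ; rewrite /pN /tp; case: ex_minnP => m /andP[_]; rewrite (negbTE xZ). Qed.
Lemma tp_le x i : 0 < i -> iter i par x \in N -> tp x <= i.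
Proof. move=> H1 H2; rewrite /tp; case: ex_minnP => m _; apply; by rewrite /tpP H1 H2 orbT. Qed.
Lemma tp_min x i : 0 < i -> i < tp x -> iter i par x \notin N.
Proof. move=> H1 H2; apply/negP => H; have := tp_le H1 H; lia. Qed.
Lemma tp_leh x : x \notin Z -> 0 < h x -> tp x <= h x.
Proof. by move=> xZ hp; apply: tp_le => //; rewrite iter_big // rt_N. Qed.

Lemma tp_shift x a : x \notin Z -> a < tp x -> tp (iter a par x) = tp x - a.
Proof.
move=> xZ Ha; apply/eqP; rewrite eqn_leq; apply/andP; split.
  apply: tp_le; first by rewrite subn_gt0.
  rewrite -iterD subnK; [exact: (pN_N xZ)| exact: ltnW].
rewrite leqNgt; apply/negP => Hlt.
have Hp := pN_N (iter_notZ a xZ); rewrite /pN -iterD in Hp.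
have Hpos := tp_pos (iter a par x).
move: Hp Hpos Hlt; set t := tp (iter a par x) => Hp Hpos Hlt.
have H1 : 0 < t + a by rewrite addn_gt0 Hpos.
have H2 : t + a < tp x by rewrite addnC -ltn_subRL.
exact: (negP (tp_min H1 H2) Hp).
Qed.

Lemma pN_shift x a : x \notin Z -> a < tp x -> pN (iter a par x) = pN x.
Proof. by move=> xZ Ha; rewrite /pN tp_shift // -iterD subnK // ltnW. Qed.
Lemma pN_rt x : x \notin Z -> rt (pN x) = rt x.
Proof. by move=> xZ; rewrite iter_rt. Qed.
Lemma pN_notZ x : x \notin Z -> pN x \notin Z.
Proof. by move=> xZ; rewrite iter_notZ. Qed.

Definition Tv x := traject par x (tp x).+1.

Lemma memT x y : y \in Tv x -> exists2 a, a <= tp x & y = iter a par x.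
Proof. by case/trajectP => a Ha ->; exists a. Qed.
Lemma memT_rt x y : x \notin Z -> y \in Tv x -> rt y = rt x.
Proof. by move=> xZ /memT [a _ ->]; rewrite iter_rt. Qed.
Lemma memT_notZ x y : x \notin Z -> y \in Tv x -> y \notin Z.
Proof. by move=> xZ /memT [a _ ->]; rewrite iter_notZ. Qed.
Lemma memT_cases x y : x \notin Z -> y \in Tv x -> y = pN x \/ pN y = pN x.
Proof.
move=> xZ /memT [a]; rewrite leq_eqVlt => /orP[/eqP -> ->|Ha ->]; first by left.
by right; apply: pN_shift.
Qed.
Lemma memT_N x y : x \notin Z -> y \in Tv x -> y \in N -> y = x \/ y = pN x.
Proof.
move=> xZ /memT [a Ha ->] HN; case: (posnP a) => [->|a0]; first by left.
move: Ha; rewrite leq_eqVlt => /orP[/eqP ->|Ha]; first by right.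
by rewrite (negbTE (tp_min a0 Ha)) in HN.
Qed.
Lemma pN_T x : pN x \in Tv x.
Proof. by apply/trajectP; exists (tp x). Qed.
Lemma x_T x : x \in Tv x.
Proof. by rewrite /Tv trajectS mem_head. Qed.

Definition lev x := count (mem N) (traject par (par x) (h x)).

Lemma lev_p x : x \notin Z -> 0 < h x -> lev x = (lev (pN x)).+1.
Proof.
move=> xZ hp; have t1 := tp_pos x; have tle := tp_leh xZ hp.
rewrite [LHS]/lev.
have -> : h x = (tp x).-1 + (h x - tp x).+1 by lia.
rewrite trajectD count_cat.
have -> : count (mem N) (traject par (par x) (tp x).-1) = 0.
  apply/eqP; rewrite -leqn0 leqNgt -has_count; apply/hasP => -[y /trajectP [i Hi ->]].
  rewrite -iterSr /= => H.
  have H1 : 0 < i.+1 by [].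
  have H2 : i.+1 < tp x by lia.
  exact: (negP (tp_min H1 H2) H).
rewrite -iterSr prednK // trajectS /= -/(pN x).
have Hh : h (pN x) = h x - tp x by rewrite /pN iter_h.
by rewrite (pN_N xZ) [in RHS]/lev Hh.
Qed.

Lemma T_path x n : x \notin Z -> n <= h x -> path F x (traject par (par x) n).
Proof.
elim: n x => [//|n IH] x xZ hn /=.
rewrite (par_spec xZ _).1 /=; last by lia.
by apply: IH; rewrite ?par_notZ // par_h //; lia.
Qed.

Lemma T_uniq x n : x \notin Z -> n <= (h x).+1 -> uniq (traject par x n).
Proof.
elim: n x => [//|n IH] x xZ hn /=.
have pZ := par_notZ xZ.
have Hu : uniq (traject par (par x) n) by apply: IH => //; rewrite par_h //; lia.
rewrite Hu andbT; apply/negP => /trajectP [i Hi E].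
have := congr1 h E; rewrite iter_h // par_h //; lia.
Qed.

Lemma rev_traj_path y m : y \notin Z -> m <= h y ->
  path F (iter m par y) (rev (traject par y m)).
Proof.
move=> yZ; elim: m => [//|m IH] hm.
rewrite trajectSr rev_rcons /= IH ?andbT; last by lia.
rewrite Fsym; apply: (par_spec (iter_notZ m yZ) _).1.
by rewrite iter_h //; lia.
Qed.

Lemma forest_aux x y : x \notin Z -> F x y -> h y <= h x -> y != par x -> False.
Proof.
move=> xZ Fxy hyx ypx; have yZ := F_notZr Fxy.
have Ert : rt y = rt x by apply: rt_same => //; apply: connect1.
have hxy : h x <= (h y).+1 by apply: (h_edge yZ); rewrite Fsym.
pose P i := [exists j : 'I_(h y).+1, iter i par x == iter j par y].
have Pex : exists i, P i.
  exists (h x); apply/existsP; exists ord_max.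
  by rewrite /= !iter_big // Ert.
case: (ex_minnP Pex) => i /existsP [[j /= Hj] /eqP Eij] imin.
have ile : i <= h x.
  apply: imin; apply/existsP; exists ord_max; by rewrite /= !iter_big // Ert.
have Hh := congr1 h Eij; rewrite !iter_h // in Hh.
have j1 : 0 < j.
  rewrite lt0n; apply/negP => /eqP j0; subst j; move: Eij => /= Eij.
  have : i = 0 \/ i = 1 by lia.
  case=> Hi; subst i => /=.
    by move: Fxy; rewrite -Eij /= F_irr.
  by rewrite -Eij eqxx in ypx.
have i1 : 0 < i by lia.
pose c := traject par x i.+1 ++ rev (traject par y j).
have cZ : forall z, z \in c -> z \notin Z.
  move=> z; rewrite /c mem_cat mem_rev => /orP[] Hz.
    by case/trajectP: Hz => k _ ->; apply: iter_notZ.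
  by case/trajectP: Hz => k _ ->; apply: iter_notZ.
suff : is_cycle e c.
  by move/hit => [z /cZ zZ zZ']; rewrite zZ' in zZ.
split.
- by rewrite size_cat size_rev !size_traject; lia.
- rewrite cat_uniq rev_uniq !T_uniq //; last by lia. 
  rewrite andbT /=; apply/hasP => -[z]; rewrite mem_rev => /trajectP [m Hm ->].
  move=> Hk; have {}Hk : iter m par y \in traject par x i.+1 by [].
  case/trajectP: Hk => k Hk E.
  have : k < i \/ k = i by lia.
  case=> Hk'.
    have Pk : P k.
      apply/existsP; have Hm' : m < (h y).+1 by lia.
      by exists (Ordinal Hm'); rewrite /= -E.
    have := imin k Pk; lia.
  subst k; have := congr1 h E; rewrite Eij !iter_h //; lia.
- rewrite /c /= rcons_cat; apply: (sub_path F_e).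
  rewrite cat_path T_path //= last_traject Eij rcons_path rev_traj_path //=.
  case: j Hj Eij Hh j1 {c cZ} => // j Hj Eij Hh _.
  by rewrite trajectS rev_cons last_rcons Fsym.
Qed.

Lemma forest x y : x \notin Z -> F x y -> y = par x \/ x = par y.
Proof.
move=> xZ Fxy; have yZ := F_notZr Fxy.
case: (leqP (h y) (h x)) => H.
  case: (eqVneq y (par x)) => [->|ne]; first by left.
  by case: (forest_aux xZ Fxy H ne).
case: (eqVneq x (par y)) => [->|ne]; first by right.
by case: (forest_aux yZ (_ : F y x) (ltnW H) ne); rewrite Fsym.
Qed.


Lemma mod3a a b : a %% 3 = b %% 3 -> a = b.+1 -> False.
Proof. move=> H E; subst a; lia. Qed.
Lemma mod3b a b : a %% 3 = b %% 3 -> a = b.+2 -> False.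
Proof. move=> H E; subst a; lia. Qed.

Section Conf.
Variables (u v : T).
Hypotheses (uZ : u \notin Z) (vZ : v \notin Z) (uN : u \in N) (vN : v \in N)
  (hu : 0 < h u) (hv : 0 < h v) (uv : u != v) (puv : pN u != pN v)
  (Hmod : rt u = rt v -> lev u %% 3 = lev v %% 3).

Lemma T_disj x : x \in Tv u -> x \in Tv v -> False.
Proof.
move=> xu xv.
have Er : rt u = rt v by rewrite -(memT_rt uZ xu) (memT_rt vZ xv).
have Hl := Hmod Er.
have lu := lev_p uZ hu; have lv := lev_p vZ hv.
case: (boolP (x \in N)) => xN.
  case: (memT_N uZ xu xN) => Exu; case: (memT_N vZ xv xN) => Exv.
  - by move: uv; rewrite -Exu -Exv eqxx.
  - by rewrite -Exv Exu in lv; apply: (mod3a (esym Hl) lv).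
  - by rewrite -Exu Exv in lu; apply: (mod3a Hl lu).
  - by move: puv; rewrite -Exu -Exv eqxx.
case: (memT_cases uZ xu) => [Ex|Eu]; first by rewrite Ex (pN_N uZ) in xN.
case: (memT_cases vZ xv) => [Ex|Ev]; first by rewrite Ex (pN_N vZ) in xN.
by move: puv; rewrite -Eu -Ev eqxx.
Qed.
End Conf.

Lemma T_edge_aux u v x : u \notin Z -> v \notin Z -> u \in N -> v \in N ->
  0 < h u -> 0 < h v -> u != v -> pN u != pN v ->
  (rt u = rt v -> lev u %% 3 = lev v %% 3) ->
  x \in Tv u -> par x \in Tv v -> F x (par x) -> False.
Proof.
move=> uZ vZ uN vN hu hv uv puv Hmod xu yv Fxy.
case/memT: (xu) => a; rewrite leq_eqVlt => /orP[/eqP Ea|Ha] Ex; last first.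
  apply: (T_disj uZ vZ hu hv uv puv Hmod (x := par x)) => //.
  by apply/trajectP; exists a.+1 => //; rewrite Ex.
have xZ := memT_notZ uZ xu.
have Exu : x = pN u by rewrite Ex Ea.
have hx : 0 < h x.
  rewrite lt0n; apply/negP => /eqP H0; by rewrite par0 // F_irr in Fxy.
have Er : rt u = rt v.
  by rewrite -(pN_rt uZ) -Exu -(par_rt xZ) (memT_rt vZ yv).
have Hl := Hmod Er.
have lu := lev_p uZ hu; rewrite -Exu in lu.
have lx := lev_p xZ hx.
have lv := lev_p vZ hv.
case: (boolP (par x \in N)) => yN.
  have tx1 : tp x = 1.
    apply/eqP; rewrite eqn_leq tp_pos andbT; exact: tp_le.
  have Epx : pN x = par x by rewrite /pN tx1.
  case: (memT_N vZ yv yN) => Ey.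
    by rewrite Epx Ey in lx; apply: (mod3b Hl); rewrite lu lx.
  by rewrite Epx Ey -lv in lx; apply: (mod3a Hl); rewrite lu lx.
have tx1 : 1 < tp x.
  have := tp_pos x; rewrite leq_eqVlt => /orP[/eqP E|//].
  by move: (pN_N xZ); rewrite /pN -E /= (negbTE yN).
have Esh := pN_shift xZ tx1; rewrite /= in Esh.
case: (memT_cases vZ yv) => [Ey|Ey]; first by rewrite Ey (pN_N vZ) in yN.
by rewrite -Esh Ey -lv in lx; apply: (mod3a Hl); rewrite lu lx.
Qed.

Lemma T_edge u v x y : u \notin Z -> v \notin Z -> u \in N -> v \in N ->
  0 < h u -> 0 < h v -> u != v -> pN u != pN v ->
  (rt u = rt v -> lev u %% 3 = lev v %% 3) ->
  x \in Tv u -> y \in Tv v -> e x y -> False.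
Proof.
move=> uZ vZ uN vN hu hv uv puv Hmod xu yv exy.
have xZ := memT_notZ uZ xu; have yZ := memT_notZ vZ yv.
have Fxy : F x y by rewrite /Frel exy xZ yZ.
case: (forest xZ Fxy) => E.
  by apply: (T_edge_aux uZ vZ uN vN hu hv uv puv Hmod xu); rewrite -E.
apply: (T_edge_aux vZ uZ vN uN hv hu _ _ _ yv); rewrite -?E //.
- by rewrite eq_sym.
- by rewrite eq_sym.
- by move=> Er; rewrite Hmod.
- by rewrite Fsym.
Qed.

Lemma internal_mem (a : T) (s : seq T) x : uniq (a :: s) -> x \in internal (a :: s) ->
  [/\ x \in a :: s, x != a & x != last a s].
Proof.
case: s => [//|w s] Ua Hx0; have Hx : x \in belast w s := Hx0.
move: Ua; rewrite cons_uniq => /andP[aN U].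
have Hx' := mem_belast Hx.
split.
- by rewrite in_cons Hx' orbT.
- by apply/eqP => E; rewrite -E Hx' in aN.
- apply/eqP => E; rewrite /= in E; move: U; rewrite lastI rcons_uniq -E Hx; done.
Qed.

Lemma T_trans v : v \notin Z -> v \in N -> 0 < h v -> transition e Z (Tv v).
Proof.
move=> vZ vN hv.
have tle := tp_leh vZ hv.
have U : uniq (Tv v) by apply: T_uniq => //; lia.
have Hl : last v (traject par (par v) (tp v)) = pN v by rewrite last_traject.
split.
- rewrite /Tv trajectS; split; first by rewrite -trajectS.
  exact: T_path.
- by rewrite size_traject; have := tp_pos v; lia.
- move=> x; rewrite /Tv trajectS /ends Hl in_cons mem_seq1 => /orP[] /eqP ->; first done.
  exact: pN_N.
- move=> x; move: U; rewrite /Tv trajectS => U Hx.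
  case: (internal_mem U Hx) => Hx1 Hx2 Hx3.
  apply/negP => xN.
  rewrite -trajectS in Hx1; case: (memT_N vZ Hx1 xN) => E.
    by rewrite E eqxx in Hx2.
  by rewrite Hl E eqxx in Hx3.
Qed.

Lemma mem_zip2 (s t : seq T) a b : (a, b) \in zip s t -> a \in s /\ b \in t.
Proof.
elim: s t => [|x s IH] [|y t] //=; rewrite in_cons => /orP[/eqP [-> ->]|/IH [H1 H2]].
  by rewrite !mem_head.
by rewrite !in_cons H1 H2 !orbT.
Qed.

Lemma pedges_mem (p : seq T) E : E \in pedges p -> exists a b : T, [/\ a \in p, b \in p & E = [set a; b]].
Proof.
rewrite /pedges => /mapP [[a b] Hab ->]; case: (mem_zip2 Hab) => H1 H2.
by exists a, b; split => //; apply: mem_behead.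
Qed.

Lemma pedges_head v : [set v; par v] \in pedges (Tv v).
Proof.
rewrite /Tv; move: (tp_pos v); case: (tp v) => // t _.
by rewrite /pedges trajectS trajectS /= mem_head.
Qed.

Lemma ends_pN v : pN v \in ends (Tv v).
Proof. by rewrite /Tv trajectS /ends last_traject -/(pN v) in_cons mem_seq1 eqxx orbT. Qed.


Lemma Nin y : (y \in N) = (y \notin Z) && [exists z, (z \in Z) && e y z].
Proof. by rewrite inE. Qed.

Definition Bset r c := [set v | [&& v \in N, rt v == r, 0 < h v & lev v %% 3 == c]].
Definition cr r := if (#|Bset r 1| <= #|Bset r 0|) && (#|Bset r 2| <= #|Bset r 0|) then 0
  else if #|Bset r 2| <= #|Bset r 1| then 1 else 2.
Definition chosen v := [&& v \in N, 0 < h v & lev v %% 3 == cr (rt v)].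

Lemma cr_max r : [/\ #|Bset r 0| <= #|Bset r (cr r)|, #|Bset r 1| <= #|Bset r (cr r)|
  & #|Bset r 2| <= #|Bset r (cr r)|].
Proof.
rewrite /cr; case: ifP => [/andP[H1 H2]|/negbT]; first by split.
rewrite negb_and -!ltnNge => H; case: ifP => H'; split => //; lia.
Qed.

Lemma mod3_2 n : (n %% 3 == 2) = (n %% 3 != 0) && (n %% 3 != 1).
Proof. by have := ltn_pmod n (isT : 0 < 3); case: (n %% 3) => [|[|[|]]]. Qed.

Lemma count_comp r v0 : v0 \in N -> rt v0 = r ->
  #|[set v | (v \in N) && (rt v == r)]| <= 4 * #|Bset r (cr r)|.
Proof.
move=> v0N Er; have v0Z := N_notZ v0N.
set A := [set v | (v \in N) && (rt v == r)].
have A2 : 1 < #|A|.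
  have -> : A = [set y in N | connect F v0 y].
    apply/setP => y; rewrite !inE -!Nin; case yN: (y \in N) => //=.
    apply/eqP/idP => [E|C]; first by apply: conn_rt => //; rewrite ?N_notZ ?E.
    by rewrite -Er; apply: rt_same.
  exact: hyp.
have HB : forall y, (y \in A :\: [set y | 0 < h y]) = (y == r).
  move=> y; rewrite !inE -!Nin; apply/idP/eqP => [/andP[/negbTE H /andP[yN /eqP E]]|->].
    by apply/eqP; rewrite -E -h0 ?N_notZ // -leqn0 leqNgt H.
  by rewrite -Er h_rt // rt_rt // eqxx rt_N.
have C1 := cardsID [set y | 0 < h y] A.
have E : A :\: [set y | 0 < h y] = [set r].
  by apply/setP => y; rewrite HB inE.
rewrite E cards1 in C1.
set A1 := A :&: [set y | 0 < h y] in C1.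
have C2 := cardsID [set y | lev y %% 3 == 0] A1.
have C3 := cardsID [set y | lev y %% 3 == 1] (A1 :\: [set y | lev y %% 3 == 0]).
have E0 : A1 :&: [set y | lev y %% 3 == 0] = Bset r 0.
  apply/setP => y; rewrite !inE -!Nin; have := ltn_pmod (lev y) (isT : 0 < 3).
  by case: (lev y %% 3) => [|[|[|k]]] //= _; case: (y \in N); case: (rt y == r); case: (0 < h y).
have E1 : (A1 :\: [set y | lev y %% 3 == 0]) :&: [set y | lev y %% 3 == 1] = Bset r 1.
  apply/setP => y; rewrite !inE -!Nin; have := ltn_pmod (lev y) (isT : 0 < 3).
  by case: (lev y %% 3) => [|[|[|k]]] //= _; case: (y \in N); case: (rt y == r); case: (0 < h y).
have E2 : (A1 :\: [set y | lev y %% 3 == 0]) :\: [set y | lev y %% 3 == 1] = Bset r 2.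
  apply/setP => y; rewrite !inE -!Nin; have := ltn_pmod (lev y) (isT : 0 < 3).
  by case: (lev y %% 3) => [|[|[|k]]] //= _; case: (y \in N); case: (rt y == r); case: (0 < h y).
rewrite E0 in C2; rewrite E1 E2 in C3.
case: (cr_max r) => M0 M1 M2.
lia.
Qed.

Lemma total : #|N| <= 4 * #|[set v | chosen v]|.
Proof.
have E1 : #|N| = \sum_(r : T) #|[set v | (v \in N) && (rt v == r)]|.
  rewrite -sum1_card (partition_big rt predT) //=; apply: eq_bigr => r _.
  by rewrite -sum1_card; apply: eq_bigl => v; rewrite inE.
have E2 : #|[set v | chosen v]| = \sum_(r : T) #|[set v | chosen v && (rt v == r)]|.
  rewrite -sum1_card (partition_big rt predT) //=; apply: eq_bigr => r _.
  by rewrite -sum1_card; apply: eq_bigl => v; rewrite !inE -?Nin.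
rewrite E1 E2 big_distrr /=; apply: leq_sum => r _.
case: (set_0Vmem [set v | (v \in N) && (rt v == r)]) => [->|[v0]]; first by rewrite cards0.
rewrite inE => /andP[v0N /eqP Er].
have -> : [set v | chosen v && (rt v == r)] = Bset r (cr r).
  apply/setP => v; rewrite !inE -?Nin /chosen.
  case: (boolP (rt v == r)) => [/eqP Erv|Hn]; first by rewrite Erv andbT.
  by rewrite andbF; case: (v \in N).
exact: count_comp v0N Er.
Qed.


Lemma chosen_prop v : chosen v -> [/\ v \in N, v \notin Z & 0 < h v].
Proof. by case/and3P => vN hv _; split => //; apply: N_notZ. Qed.

Lemma main_sec : exists S : seq (seq T),
  [/\ (forall P, P \in S -> transition e Z P), normal_set e S & #|N| <= 4 * size S].
Proof.
set L := enum [set v | chosen v].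
have UL : uniq L by apply: enum_uniq.
have memL v : (v \in L) = chosen v by rewrite mem_enum inE.
have Hmodc : forall u v, chosen u -> chosen v -> rt u = rt v -> lev u %% 3 = lev v %% 3.
  move=> u v /and3P[_ _ /eqP Hu] /and3P[_ _ /eqP Hv] E; by rewrite Hu Hv E.
have Hdef : forall i, i < size L -> exists x0 : T, True.
  by move=> i; case: (L) => // x0 ? _; exists x0.
exists (map Tv L); split.
- move=> P /mapP [v]; rewrite memL => /chosen_prop [vN vZ hv] ->; exact: T_trans.
- split.
  + move=> i j; rewrite size_map => Hi Hj Hij P Q; rewrite /P /Q {P Q}.
    case: (Hdef i Hi) => x0 _.
    rewrite !(nth_map x0) //.
    have cu : chosen (nth x0 L i) by rewrite -memL mem_nth.
    have cv : chosen (nth x0 L j) by rewrite -memL mem_nth.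
    have uv : nth x0 L i != nth x0 L j by rewrite nth_uniq.
    move: cu cv uv; set u := nth x0 L i; set v := nth x0 L j => cu cv uv.
    case/chosen_prop: (cu) => uN uZ hu; case/chosen_prop: (cv) => vN vZ hv.
    case: (eqVneq (pN u) (pN v)) => [E|puv].
      right; exists (pN u); first exact: ends_pN.
      by rewrite E; apply: ends_pN.
    left; split.
      rewrite disjoint_subset; apply/subsetP => x; rewrite inE => xu.
      rewrite inE /= inE; apply/negP => xv.
      exact: (T_disj uZ vZ hu hv uv puv (Hmodc u v cu cv) xu xv).
    move=> x y; rewrite !inE => xu yv; apply/negP => exy.
    exact: (T_edge uZ vZ uN vN hu hv uv puv (Hmodc u v cu cv) xu yv exy).
  + move=> i; rewrite size_map => Hi.
    case: (Hdef i Hi) => x0 _.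
    rewrite (nth_map x0) //.
    have cu : chosen (nth x0 L i) by rewrite -memL mem_nth.
    case/chosen_prop: (cu) => uN uZ hu.
    exists [set nth x0 L i; par (nth x0 L i)]; first exact: pedges_head.
    move=> j Hj Hji.
    rewrite (nth_map x0) //.
    have cv : chosen (nth x0 L j) by rewrite -memL mem_nth.
    have vu : nth x0 L j != nth x0 L i by rewrite nth_uniq.
    move: cu cv vu uN uZ hu; set u := nth x0 L i; set v := nth x0 L j => cu cv vu uN uZ hu.
    case/chosen_prop: (cv) => vN vZ hv.
    apply/negP => /pedges_mem [a [b [Ha Hb E]]].
    have uin : u \in Tv v.
      have : u \in [set a; b] by rewrite -E set21.
      by case/set2P => ->.
    have Er : rt u = rt v := memT_rt vZ uin.
    case: (memT_N vZ uin uN) => Eu; first by rewrite Eu eqxx in vu.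
    have lv := lev_p vZ hv; rewrite -Eu in lv.
    exact: (mod3a (Hmodc v u cv cu (esym Er)) lv).
- by rewrite size_map -cardE; apply: total.
Qed.

End Proof.

Unset Implicit Arguments.
Set Strict Implicit.

Theorem mainTheorem11 (T : finType) (e : rel T) (s : nat) (Z : {set T}) :
  1 <= s ->
  plantation e s Z ->
  (forall x, x \notin Z ->
     1 < #|[set y in Nset e Z | connect (Frel e Z) x y]|) ->
  exists S : seq (seq T),
    [/\ (forall P, P \in S -> transition e Z P),
        normal_set e S &
        #|Nset e Z| <= 4 * size S].
Proof.
move=> _ [[esy eirr] [_ hit]] hyp.
exact: (main_sec esy eirr hit hyp).
Qed.
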